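(* Let $\{e_i\}_{i=1}^N$ be the standard orthonormal basis of $\mathcal H_N=\ell_2(N)$, and let $P,Q$ be orthogonal projections of rank $M$ on $\mathcal H_N$. Suppose $\{f_i\}_{i=1}^N$ is a Parseval frame for an $M$-dimensional Hilbert space $\mathcal H_M$ whose analysis operator $T$ satisfies $Tf_i=Pe_i$ for all $i=1,\dots,N$. If \[\sum_{i=1}^N\|Pe_i-Qe_i\|^2<\epsilon,\] then there is a Parseval frame $\{g_i\}_{i=1}^N$ for $\mathcal H_M$ whose analysis operator $T_1$ satisfies $T_1g_i=Qe_i$ for all $i=1,\dots,N$, and \[\sum_{i=1}^N\|f_i-g_i\|^2<2\epsilon.\] Moreover, if $\{Qe_i\}_{i=1}^N$ is equal norm (i.e. $\|Qe_i\|$ is independent of $i$), then $\{g_i\}_{i=1}^N$ can be chosen to be equal norm.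
   Context: A family $\{f_i\}_{i=1}^N$ in $\mathcal H_M$ is a Parseval frame if $\sum_{i=1}^N|\langle f,f_i\rangle|^2=\|f\|^2$ for all $f\in\mathcal H_M$. Its analysis operator is $T:\mathcal H_M\to\ell_2(N)$, $T(f)=\sum_{i=1}^N\langle f,f_i\rangle e_i$. A frame is equal norm if all $\|f_i\|$ are equal. *)

(* Defs.v *)
(* Scalars: an arbitrary numClosedFieldType C (e.g. algC),
   i.e. the complex setting; H_K is modelled as the row space 'rV[C]_K with
   the standard inner product <u,v> = \sum_j u_j (v_j)^*. *)
From HB Require Import structures.
From mathcomp Require Import all_boot all_order all_algebra.
Set Implicit Arguments. Unset Strict Implicit. Unset Printing Implicit Defensive.
Import Order.TTheory GRing.Theory Num.Theory.
Local Open Scope ring_scope.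

Section FrameDefs.
Variable C : numClosedFieldType.

Definition dotv n (u v : 'rV[C]_n) : C := \sum_(j < n) u 0 j * (v 0 j)^*.

Definition normsq n (u : 'rV[C]_n) : C := \sum_(j < n) `|u 0 j| ^+ 2.

Definition normv n (u : 'rV[C]_n) : C := sqrtC (normsq u).

Definition stdb N (i : 'I_N) : 'rV[C]_N := delta_mx 0 i.

Definition mxapp N (A : 'M[C]_N) (v : 'rV[C]_N) : 'rV[C]_N := (A *m v^T)^T.

Definition adjmx m n (A : 'M[C]_(m, n)) : 'M[C]_(n, m) := map_mx (@Num.conj C) A^T.

Definition orth_proj N (A : 'M[C]_N) : Prop := A *m A = A /\ adjmx A = A.

Definition parseval_frame N M (f : 'I_N -> 'rV[C]_M) : Prop :=
  forall x : 'rV[C]_M, \sum_(i < N) `|dotv x (f i)| ^+ 2 = normsq x.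

Definition analysis N M (f : 'I_N -> 'rV[C]_M) (x : 'rV[C]_M) : 'rV[C]_N :=
  \row_(i < N) dotv x (f i).

Definition equal_norm N n (f : 'I_N -> 'rV[C]_n) : Prop :=
  forall i j, normv (f i) = normv (f j).

End FrameDefs.

(* Main.v *)
Require Import Defs.
From HB Require Import structures.
From mathcomp Require Import all_boot all_order all_algebra.
Set Implicit Arguments. Unset Strict Implicit. Unset Printing Implicit Defensive.
Import Order.TTheory GRing.Theory Num.Theory.
Local Open Scope ring_scope.
Local Open Scope sesquilinear_scope.
Section S.
Variable C : numClosedFieldType.

Lemma adjM m n p (A : 'M[C]_(m,n)) (B : 'M[C]_(n,p)) : (A *m B)^t* = B^t* *m A^t*.
Proof. by rewrite trmx_mul map_mxM. Qed.
Lemma adjD m n (A B : 'M[C]_(m,n)) : (A + B)^t* = A^t* + B^t*.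
Proof. by rewrite linearD map_mxD. Qed.
Lemma adjN m n (A : 'M[C]_(m,n)) : (- A)^t* = - A^t*.
Proof. by rewrite linearN map_mxN. Qed.
Lemma adjB m n (A B : 'M[C]_(m,n)) : (A - B)^t* = A^t* - B^t*.
Proof. by rewrite adjD adjN. Qed.
Lemma adj1 n : (1%:M : 'M[C]_n)^t* = 1%:M.
Proof. by rewrite trmx1 map_mx1. Qed.
Lemma tr_adj n (A : 'M[C]_n) : \tr (A^t*) = (\tr A)^*.
Proof. rewrite /mxtrace rmorph_sum; apply: eq_bigr => i _; by rewrite !mxE. Qed.

Lemma frobE m n (X : 'M[C]_(m,n)) :
  \tr (X *m X^t*) = \sum_(i < m) \sum_(j < n) `|X i j| ^+ 2.
Proof.
rewrite /mxtrace; apply: eq_bigr => i _; rewrite mxE; apply: eq_bigr => j _.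
by rewrite !mxE normCK.
Qed.
Lemma frob_ge0 m n (X : 'M[C]_(m,n)) : 0 <= \tr (X *m X^t*).
Proof. by rewrite frobE; apply: sumr_ge0 => i _; apply: sumr_ge0 => j _; apply: exprn_ge0. Qed.
Lemma frob_eq0 m n (X : 'M[C]_(m,n)) : \tr (X *m X^t*) = 0 -> X = 0.
Proof.
rewrite frobE => /eqP; rewrite psumr_eq0 => [/allP H|i _]; last first.
  by apply: sumr_ge0 => j _; apply: exprn_ge0.
apply/matrixP => i j; rewrite mxE.
have := H i (mem_index_enum _); rewrite /=.
rewrite psumr_eq0 => [/allP/(_ j (mem_index_enum _))|]; last by move=> *; apply: exprn_ge0.
by rewrite /= expf_eq0 /= normr_eq0 => /eqP.
Qed.

Lemma sum_normsq m n (X : 'M[C]_(m,n)) :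
  \sum_(i < m) normsq (row i X) = \tr (X *m X^t*).
Proof.
rewrite frobE; apply: eq_bigr => i _; rewrite /normsq; apply: eq_bigr => j _.
by rewrite mxE.
Qed.


Lemma proj_of_sub k n (X : 'M[C]_n) (S : 'M[C]_(k,n)) : X *m X = X -> X^t* = X ->
  S *m S^t* = 1%:M -> (S :=: X)%MS -> S^t* *m S = X.
Proof.
move=> XX Xh SS eqS.
have /submxP [D HD] : (X <= S)%MS by rewrite eqS.
have /submxP [D' HD'] : (S <= X)%MS by rewrite eqS.
have SX : S *m X = S by rewrite HD' -mulmxA XX.
have XSS : X *m S^t* *m S = X by rewrite {1}HD -!mulmxA (mulmxA S) SS mul1mx.
by rewrite -{1}SX adjM Xh XSS.
Qed.

Lemma herm_idem_fact n (X : 'M[C]_n) : X *m X = X -> X^t* = X ->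
  forall k, \rank X = k -> exists S : 'M[C]_(k,n), S *m S^t* = 1%:M /\ S^t* *m S = X.
Proof.
move=> XX Xh k <-; exists (schmidt (row_base X)).
have SS : schmidt (row_base X) *m (schmidt (row_base X))^t* = 1%:M.
  by apply/unitarymxP/schmidt_unitarymx/rank_leq_col.
split => //; apply: proj_of_sub => //.
apply: eqmx_trans (eq_row_base X).
by apply: eqmx_schmidt_free; apply: row_base_free.
Qed.

Lemma rank_trace n (X : 'M[C]_n) : X *m X = X -> X^t* = X ->
  \tr X = (\rank X)%:R.
Proof.
move=> XX Xh; have [S [SS SSX]] := herm_idem_fact XX Xh (erefl (\rank X)).
by have := mxtrace_mulC (S^t*) S; rewrite SS mxtrace_scalar SSX => ->.
Qed.


Lemma normsq_row m n (X : 'M[C]_(m,n)) i : normsq (row i X) = (X *m X^t*) i i.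
Proof. rewrite /normsq mxE; apply: eq_bigr => j _; by rewrite !mxE normCK. Qed.

Lemma normsq_rv n (u : 'rV[C]_n) : normsq u = (u *m u^t*) 0 0.
Proof. by rewrite -normsq_row; congr normsq; apply/rowP => j; rewrite !mxE; congr (u _ _); apply: ord1. Qed.

Lemma dotv_row m p n (X : 'M[C]_(m,n)) (Y : 'M[C]_(p,n)) i k :
  dotv (row i X) (row k Y) = (X *m Y^t*) i k.
Proof. rewrite /dotv mxE; apply: eq_bigr => j _; by rewrite !mxE. Qed.

Lemma dotv_mul m n (x : 'rV[C]_n) (X : 'M[C]_(m,n)) i :
  dotv x (row i X) = (x *m X^t*) 0 i.
Proof. rewrite /dotv mxE; apply: eq_bigr => j _; by rewrite !mxE. Qed.

Lemma analysis_row m n (X : 'M[C]_(m,n)) i :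
  analysis (fun k => row k X) (row i X) = row i (X *m X^t*).
Proof. apply/rowP => k; rewrite [LHS]mxE [RHS]mxE. exact: dotv_row. Qed.

Lemma parseval_row m n (X : 'M[C]_(m,n)) (x : 'rV[C]_n) :
  \sum_(i < m) `|dotv x (row i X)| ^+ 2 = (x *m X^t* *m X *m x^t*) 0 0.
Proof.
transitivity (normsq (x *m X^t*)).
  by rewrite /normsq; apply: eq_bigr => i _; rewrite dotv_mul.
by rewrite normsq_rv adjM trmxCK !mulmxA.
Qed.

Lemma mxapp_std N (A : 'M[C]_N) i : mxapp A (stdb C i) = row i A^T.
Proof. by rewrite /mxapp /stdb trmx_mul trmxK rowE. Qed.

Lemma row_conj_diag m n (A : 'M[C]_(m,n)) (B : 'M[C]_n) j :
  (row j A *m B *m (row j A)^t*) 0 0 = (A *m B *m A^t*) j j.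
Proof.
rewrite -row_mul !mxE; apply: eq_bigr => k _; by rewrite !mxE.
Qed.

Lemma adj_diag n (a : 'rV[C]_n) : (diag_mx a)^t* = diag_mx (map_mx (@Num.conj C) a).
Proof. by rewrite tr_diag_mx map_diag_mx. Qed.

Lemma diag_mul n (a b : 'rV[C]_n) :
  diag_mx a *m diag_mx b = diag_mx (\row_j (a 0 j * b 0 j)).
Proof. by rewrite mul_diag_mx; apply/matrixP => i j; rewrite !mxE mulrnAr. Qed.

Lemma tr_diag n (a : 'rV[C]_n) : \tr (diag_mx a) = \sum_j a 0 j.
Proof. by apply: eq_bigr => j _; rewrite mxE eqxx mulr1n. Qed.


Lemma scal_facts (s : C) : 0 <= s ->
  ((s * s^-1) * (s * s^-1) = s * s^-1 /\ (s * s^-1)^* = s * s^-1 /\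
   (s^-1)^* = s^-1 /\ s^-1 * s^-1 * s ^+ 2 = s * s^-1) /\
  ((s * s^-1) * s^-1 = s^-1 /\ s^-1 * s ^+ 2 = s /\
   s ^+ 2 * (1 - s * s^-1) = 0 /\ s^* = s).
Proof.
move=> s0; have [->|sn0] := eqVneq s 0.
  by rewrite invr0 !mulr0 !mul0r conjC0 expr2 !mul0r; do !split.
have cc : (s^-1)^* = s^-1 by rewrite geC0_conj // invr_ge0.
rewrite mulfV // conjC1 mulr1 subrr mulr0 mul1r cc geC0_conj //; do !split => //.
  by rewrite expr2 -mulrA (mulrA _ s) mulVf // mul1r mulVf.
by rewrite expr2 mulrA mulVf // mul1r.
Qed.

Lemma adj0 m n : (0 : 'M[C]_(m,n))^t* = 0.
Proof. by rewrite trmx0 map_mx0. Qed.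

Lemma herm_tr n (A : 'M[C]_n) : A^t* = A -> (A^T)^t* = A^T.
Proof.
move=> H; apply/matrixP => i j; have /matrixP /(_ j i) := H.
by rewrite !mxE => <-.
Qed.

Lemma adjtr_diag m n (X : 'M[C]_(m,n)) j : (X^t* *m X) j j = \sum_i `|X i j| ^+ 2.
Proof. rewrite mxE; apply: eq_bigr => i _; by rewrite !mxE normCKC. Qed.

End S.

Theorem theorem3p4 (C : numClosedFieldType) (N M : nat)
    (P Q : 'M[C]_N) (f : 'I_N -> 'rV[C]_M) (eps : C) :
  orth_proj P -> orth_proj Q -> \rank P = M -> \rank Q = M ->
  parseval_frame f ->
  (forall i, analysis f (f i) = mxapp P (stdb C i)) ->
  \sum_(i < N) normsq (mxapp P (stdb C i) - mxapp Q (stdb C i)) < eps ->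
  exists g : 'I_N -> 'rV[C]_M,
    [/\ parseval_frame g,
        (forall i, analysis g (g i) = mxapp Q (stdb C i)),
        \sum_(i < N) normsq (f i - g i) < 2 * eps
      & equal_norm (fun i => mxapp Q (stdb C i)) -> equal_norm g].
Proof.
move=> [PP Ph] [QQ Qh] rkP rkQ parf anf hyp.
rewrite /adjmx in Ph Qh.
set F := \matrix_(i, j) f i 0 j : 'M[C]_(N,M).
have rowF i : row i F = f i by apply/rowP => j; rewrite !mxE.
set Pt := P^T; set Qt := Q^T.
have Pth : Pt^t* = Pt by apply: herm_tr.
have Qth : Qt^t* = Qt by apply: herm_tr.
have PtPt : Pt *m Pt = Pt by rewrite -trmx_mul PP.
have QtQt : Qt *m Qt = Qt by rewrite -trmx_mul QQ.
have rkQt : \rank Qt = M by rewrite mxrank_tr.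
have FFt : F *m F^t* = Pt.
  apply/matrixP => i k; rewrite -dotv_row !rowF.
  by have := anf i; rewrite mxapp_std => /rowP /(_ k); rewrite !mxE.
have parF (x : 'rV[C]_M) : (x *m F^t* *m F *m x^t*) 0 0 = (x *m x^t*) 0 0.
  rewrite -parseval_row -normsq_rv -(parf x); apply: eq_bigr => i _.
  by rewrite rowF.
set K := F^t* *m Qt *m F.
have Kh : K^t* = K by rewrite /K !adjM trmxCK Qth ?mulmxA.
have Kn : K \is normalmx by apply/normalmxP; rewrite Kh.
set V := spectralmx K; set dd := spectral_diag K.
have Vu : V *m V^t* = 1%:M by apply/unitarymxP/spectral_unitarymx.
have VtV : V^t* *m V = 1%:M.
  by rewrite -[V^t*]mul1mx mulmxKtV // spectral_unitarymx.
have KE : K = V^t* *m diag_mx dd *m V.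
  by rewrite -invmx_unitary ?spectral_unitarymx //; apply/orthomx_spectralP.
have Dg : V *m K *m V^t* = diag_mx dd.
  by rewrite KE !mulmxA Vu mul1mx -mulmxA Vu mulmx1.
set Y := Qt *m F *m V^t*.
have YY : Y^t* *m Y = diag_mx dd.
  rewrite /Y !adjM !trmxCK Qth -Dg /K !mulmxA -(mulmxA _ Qt Qt) QtQt.
  by rewrite ?mulmxA.
have ddE j : dd 0 j = \sum_i `|Y i j| ^+ 2.
  by rewrite -adjtr_diag YY mxE eqxx mulr1n.
have dd_ge0 j : 0 <= dd 0 j.
  by rewrite ddE; apply: sumr_ge0 => i _; apply: exprn_ge0.
set I1 := 1%:M - Qt.
have I1h : I1^t* = I1 by rewrite /I1 adjB adj1 Qth.
have I1I1 : I1 *m I1 = I1.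
  by rewrite /I1 mulmxBl mul1mx mulmxBr mulmx1 QtQt subrr subr0.
have VFFV j : (V *m (F^t* *m F) *m V^t*) j j = 1.
  rewrite -row_conj_diag mulmxA parF -normsq_rv normsq_row Vu.
  by rewrite mxE eqxx.
have dd_le1 j : dd 0 j <= 1.
  set Z' := I1 *m F *m V^t*.
  have : Z'^t* *m Z' = V *m (F^t* *m F) *m V^t* - V *m K *m V^t*.
    rewrite /Z' !adjM trmxCK I1h !mulmxA -(mulmxA _ I1 I1) I1I1.
    by rewrite /I1 /K mulmxBr mulmx1 !mulmxBl ?mulmxA.
  move=> /matrixP /(_ j j); rewrite adjtr_diag [in RHS]mxE VFFV Dg !mxE eqxx mulr1n.
  move=> H; rewrite -subr_ge0 -H; apply: sumr_ge0 => i _; by apply: exprn_ge0.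
have dd_sq j : 0 <= sqrtC (dd 0 j) by rewrite sqrtC_ge0.
have hs j := scal_facts (dd_sq j).
have hs2 j : sqrtC (dd 0 j) ^+ 2 = dd 0 j by rewrite sqrtCK.
set sv := \row_j sqrtC (dd 0 j).
set cv := \row_j (sqrtC (dd 0 j))^-1.
set ev := \row_j (sqrtC (dd 0 j) * (sqrtC (dd 0 j))^-1).
set Dc := diag_mx cv; set Ds := diag_mx sv; set E := diag_mx ev.
set J := diag_mx (\row_j (1 - ev 0 j)).
have JE : J = 1%:M - E.
  apply/matrixP => i j; rewrite !mxE; case: (i == j); rewrite ?mulr1n ?mulr0n //.
  by rewrite subr0.
have Dch : Dc^t* = Dc.
  rewrite adj_diag; congr diag_mx; apply/rowP => j; rewrite !mxE.
  by have [[_ [_ [-> _]]] _] := hs j.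
have Eh : E^t* = E.
  rewrite adj_diag; congr diag_mx; apply/rowP => j; rewrite !mxE.
  by have [[_ [-> _]] _] := hs j.
have EE : E *m E = E.
  rewrite diag_mul; congr diag_mx; apply/rowP => j; rewrite !mxE.
  by have [[-> _] _] := hs j.
set Yh := Y *m Dc.
have YhYh : Yh^t* *m Yh = E.
  rewrite /Yh adjM Dch -mulmxA (mulmxA _ Y) YY !diag_mul; congr diag_mx.
  apply/rowP => j; rewrite !mxE mulrA [_ * dd 0 j]mulrC -mulrA mulrC.
  by have [[_ [_ [_ <-]]] _] := hs j; rewrite hs2.
have Jh : J^t* = J by rewrite JE adjB adj1 Eh.
have JJ : J *m J = J.
  by rewrite JE mulmxBl mul1mx mulmxBr mulmx1 EE subrr subr0.
have YJ : Y *m J = 0.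
  apply: frob_eq0; rewrite mxtrace_mulC adjM Jh -mulmxA (mulmxA _ Y) YY.
  rewrite diag_mul diag_mul (_ : diag_mx _ = 0) ?mxtrace0 //.
  apply/matrixP => i j; rewrite !mxE.
  have [_ [_ [H _]]] := (hs i).2; rewrite sqrtCK in H.
  by rewrite H mulr0 mul0rn.
have YE : Y *m E = Y.
  by apply/eqP; rewrite -subr_eq0 -oppr_eq0 opprB -{1}[Y]mulmx1 -mulmxBr -JE YJ.
have YhE : Yh *m E = Yh.
  rewrite /Yh -mulmxA diag_mul; congr (_ *m diag_mx _); apply/rowP => j.
  by rewrite !mxE mulrC; have [-> _] := (hs j).2.
have YhDs : Yh *m Ds = Y.
  rewrite /Yh -mulmxA diag_mul -{2}YE; congr (_ *m diag_mx _); apply/rowP => j.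
  by rewrite !mxE mulrC.
have QtYh : Qt *m Yh = Yh by rewrite /Yh /Y !mulmxA QtQt.
have YhQt : Yh^t* *m Qt = Yh^t* by rewrite -{1}Qth -adjM QtYh.
set W := Yh *m Yh^t*.
have Wh : W^t* = W by rewrite /W adjM trmxCK.
have QtW : Qt *m W = W by rewrite /W mulmxA QtYh.
have WQt : W *m Qt = W by rewrite /W -mulmxA YhQt.
have WW : W *m W = W by rewrite /W mulmxA -(mulmxA Yh) YhYh YhE.
set R := Qt - W.
have Rh : R^t* = R by rewrite /R adjB Qth Wh.
have RR : R *m R = R.
  by rewrite /R mulmxBl !mulmxBr QtQt QtW WQt WW subrr subr0.
have rkRJ : \rank R = \rank J.
  apply/eqP; rewrite -(eqr_nat C) -!rank_trace //.
  rewrite /R JE !linearB /= mxtrace1 rank_trace // rkQt /W mxtrace_mulC YhYh.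
  by [].
have [k rkJ] : exists k, \rank J = k by exists (\rank J).
rewrite rkJ in rkRJ.
have [SJ [SJS SJJ]] := herm_idem_fact JJ Jh rkJ.
have [SR [SRS SRR]] := herm_idem_fact RR Rh rkRJ.
have SR_R : SR *m R = SR by rewrite -SRR mulmxA SRS mul1mx.
have SJ_J : SJ *m J = SJ by rewrite -SJJ mulmxA SJS mul1mx.
have RYh : R *m Yh = 0.
  by rewrite /R mulmxBl QtYh /W -mulmxA YhYh YhE subrr.
have SRYh : SR *m Yh = 0 by rewrite -SR_R -mulmxA RYh mulmx0.
have YhJ : Yh *m J = 0 by rewrite JE mulmxBr mulmx1 YhE subrr.
have YhSJt : Yh *m SJ^t* = 0.
  by rewrite -SJ_J adjM Jh mulmxA YhJ mul0mx.
have RQt : R *m Qt = R by rewrite /R mulmxBl QtQt WQt.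
have SRQt : SR *m Qt = SR by rewrite -{1}SR_R -mulmxA RQt SR_R.
set Z := SR^t* *m SJ.
set G' := Yh + Z.
have Zt : Z^t* = SJ^t* *m SR by rewrite /Z adjM trmxCK.
have YhZ : Yh^t* *m Z = 0 by rewrite /Z mulmxA -adjM SRYh adj0 mul0mx.
have ZYh : Z^t* *m Yh = 0 by rewrite Zt -mulmxA SRYh mulmx0.
have ZZ : Z^t* *m Z = J by rewrite Zt /Z mulmxA -(mulmxA _ SR) SRS mulmx1.
have YhZt : Yh *m Z^t* = 0 by rewrite Zt mulmxA YhSJt mul0mx.
have ZYht : Z *m Yh^t* = 0 by rewrite -[Z]trmxCK -adjM YhZt adj0.
have ZZt : Z *m Z^t* = R by rewrite Zt /Z mulmxA -(mulmxA _ SJ) SJS mulmx1.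
have G'G' : G'^t* *m G' = 1%:M.
  rewrite /G' adjD mulmxDl !mulmxDr YhYh YhZ ZYh ZZ addr0 add0r JE.
  by rewrite addrC subrK.
have G'G't : G' *m G'^t* = Qt.
  rewrite /G' adjD mulmxDl !mulmxDr YhZt ZYht ZZt addr0 add0r /R.
  by rewrite addrC subrK.
set G := G' *m V.
have GG : G^t* *m G = 1%:M.
  by rewrite /G adjM -mulmxA (mulmxA (G'^t*)) G'G' mul1mx VtV.
have GGt : G *m G^t* = Qt.
  by rewrite /G adjM -mulmxA (mulmxA V) Vu mul1mx G'G't.
set FV := F *m V^t*.
have QtFV : Qt *m FV = Y by rewrite /FV /Y mulmxA.
have trFG : \tr (F *m G^t*) = \sum_j sv 0 j.
  rewrite /G adjM mulmxA -/FV mxtrace_mulC /G' adjD mulmxDl.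
  have -> : Z^t* *m FV = 0.
    by rewrite Zt -mulmxA -SRQt -mulmxA QtFV -YhDs (mulmxA SR) SRYh mul0mx mulmx0.
  rewrite addr0 -YhQt -mulmxA QtFV /Yh adjM Dch -mulmxA YY diag_mul tr_diag.
  apply: eq_bigr => j _; rewrite !mxE.
  by have [_ [H _]] := (hs j).2; rewrite hs2 in H.
have trGF : \tr (G *m F^t*) = \sum_j sv 0 j.
  rewrite -[G]trmxCK -adjM tr_adj trFG rmorph_sum; apply: eq_bigr => j _.
  by rewrite mxE; have [_ [_ [_ H]]] := (hs j).2; exact: H.
have trPQ : \tr (Pt *m Qt) = \sum_j dd 0 j.
  rewrite -FFt -mulmxA mxtrace_mulC ?mulmxA -/K KE mxtrace_mulC mulmxA Vu mul1mx.
  by rewrite tr_diag.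
have ddle j : dd 0 j <= sv 0 j.
  have s1 : sqrtC (dd 0 j) <= 1.
    by rewrite -sqrtC1 ler_sqrtC // nnegrE.
  rewrite mxE -{1}hs2 expr2 -[X in _ <= X]mulr1.
  by apply: ler_wpM2l.
set g := fun i => row i G.
exists g; split.
- move=> x; rewrite parseval_row -(mulmxA x) GG mulmx1 normsq_rv //.
- by move=> i; rewrite analysis_row GGt mxapp_std.
- have -> : \sum_(i < N) normsq (f i - g i) = \tr ((F - G) *m (F - G)^t*).
    rewrite -sum_normsq; apply: eq_bigr => i _; by rewrite /g -rowF linearB.
  have hyp' : \tr ((Pt - Qt) *m (Pt - Qt)^t*) < eps.
    rewrite -sum_normsq; apply: le_lt_trans hyp; rewrite le_eqVlt; apply/orP; left.
    apply/eqP; apply: eq_bigr => i _; by rewrite !mxapp_std linearB.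
  have e0 : 0 <= eps by apply: le_trans (ltW hyp'); apply: frob_ge0.
  move: hyp'; rewrite !adjB !mulmxBl !mulmxBr Pth Qth PtPt QtQt FFt GGt.
  rewrite !linearB /= (mxtrace_mulC Qt Pt) trPQ trFG trGF => H.
  have sle : \sum_j dd 0 j <= \sum_j sv 0 j by apply: ler_sum => j _.
  apply: le_lt_trans (lt_le_trans H _).
    by apply: lerB; [apply: lerB | apply: lerB].
  by rewrite mulr_natl mulr2n lerDl.
- move=> H i j; have := H i j; rewrite /normv !mxapp_std /g.
  by rewrite !normsq_row GGt -QtQt -{2 4}Qth.
Qed.
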